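(* Let $A\in\mathfrak{B}_{n\times m}$. (a) If $X_1,X_2,\dots,X_s\in\mathcal{T}_n$ are such that $r(X_1X_2\cdots X_sA)<r(X_2X_3\cdots X_sA)<\cdots<r(X_sA)<r(A)$, then $c(X_1X_2\cdots X_sA)<c(A)$. (b) If $Y_1,Y_2,\dots,Y_t\in\mathcal{T}_m$ are such that $c(AY_1Y_2\cdots Y_t)<c(AY_2Y_3\cdots Y_t)<\cdots<c(AY_t)<c(A)$, then $r(AY_1Y_2\cdots Y_t)<r(A)$.
   Context: $\mathfrak{B}_{n\times m}$ denotes the set of all $n\times m$ matrices with entries in $\{0,1\}$. For $A=[a_{ij}]\in\mathfrak{B}_{n\times m}$, $r(A)=\langle x_1,\dots,x_n\rangle$ with $x_i=\sum_{j=1}^m a_{ij}2^{m-j}$ (row $i$ read as a binary number, first entry most significant), and $c(A)=\langle y_1,\dots,y_m\rangle$ with $y_j=\sum_{i=1}^n a_{ij}2^{n-i}$ (column $j$ read as a binary number, top entry most significant). Tuples are compared in the lexicographic order $<$. $\mathcal{T}_k$ denotes the set of $k\times k$ transposition matrices, i.e. permutation matrices which, multiplied from the left, interchange exactly two rows of a matrix, and multiplied from the right, interchange exactly two columns. *)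

(* Defs.v *)
From mathcomp Require Import all_boot all_order all_algebra all_fingroup.
Set Implicit Arguments. Unset Strict Implicit. Unset Printing Implicit Defensive.
Import GRing.Theory.
Local Open Scope ring_scope.

(* 0/1 matrices are represented as integer matrices with entries in {0,1},
   so that products with permutation matrices are ordinary matrix products. *)
Definition is_binary_mx (n m : nat) (A : 'M[int]_(n, m)) : Prop :=
  forall i j, A i j = 0 \/ A i j = 1.

Definition is_transposition_mx (k : nat) (X : 'M[int]_k) : Prop :=
  exists i j : 'I_k, i != j /\ X = tperm_mx i j.

Definition row_val (n m : nat) (A : 'M[int]_(n, m)) (i : 'I_n) : nat :=
  (\sum_(j < m) `|A i j|%N * 2 ^ (m - j.+1))%N.

Definition col_val (n m : nat) (A : 'M[int]_(n, m)) (j : 'I_m) : nat :=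
  (\sum_(i < n) `|A i j|%N * 2 ^ (n - i.+1))%N.

Definition rvec (n m : nat) (A : 'M[int]_(n, m)) : seq nat :=
  [seq row_val A i | i <- enum 'I_n].
Definition cvec (n m : nat) (A : 'M[int]_(n, m)) : seq nat :=
  [seq col_val A j | j <- enum 'I_m].

Fixpoint lexlt (s t : seq nat) : bool :=
  match s, t with
  | [::], [::] => false
  | [::], _ :: _ => true
  | _ :: _, [::] => false
  | x :: s', y :: t' => (x < y)%N || ((x == y) && lexlt s' t')
  end.

Definition mprod (k : nat) (Xs : seq 'M[int]_k) : 'M[int]_k :=
  foldr (fun X P => X *m P) 1%:M Xs.

(* Main.v *)
Require Import Defs.
From mathcomp Require Import all_boot all_order all_algebra all_fingroup zify.
Set Implicit Arguments. Unset Strict Implicit. Unset Printing Implicit Defensive.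


Lemma lexlt_cons x y s t : lexlt (x :: s) (y :: t) = (x < y)%N || ((x == y) && lexlt s t).
Proof. by []. Qed.

Lemma lexlt_ordP n (f g : 'I_n -> nat) :
  lexlt [seq f i | i <- enum 'I_n] [seq g i | i <- enum 'I_n] <->
  exists p : 'I_n, (forall q : 'I_n, (q < p)%N -> f q = g q) /\ (f p < g p)%N.
Proof.
elim: n f g => [|n IH] f g.
  rewrite enum_ord0 /=; split=> // -[[]] //.
rewrite enum_ordSl !map_cons lexlt_cons -!map_comp -enumT; split.
  case/orP => [lt0|/andP[/eqP e0 H]].
    2: have [p [Hq Hp]] := proj1 (IH (f \o lift ord0) (g \o lift ord0)) H.
    by exists ord0; split => // q.
  exists (lift ord0 p); split => // q.
  case: (unliftP ord0 q) => [q' ->|->] //.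
  by rewrite /= !ltnS => /Hq.
case=> p [Hq Hp]; case: (unliftP ord0 p) Hp Hq => [p' ->|->] Hp Hq; last by rewrite Hp.
rewrite Hq // eqxx /=; apply/orP; right; apply: (proj2 (IH (f \o lift ord0) (g \o lift ord0))); exists p'; split => // q lt.
exact: Hq.
Qed.

Lemma bin_bound m (b : 'I_m -> nat) : (forall j, b j <= 1)%N ->
  (\sum_(j < m) b j * 2 ^ (m - j.+1) < 2 ^ m)%N.
Proof.
elim: m b => [|m IH] b Hb; first by rewrite big_ord0.
rewrite big_ord_recl /= subSS subn0 expnS mul2n -addnn.
rewrite -addnS; apply: leq_add; first by rewrite -[X in (_ <= X)%N]mul1n leq_mul2r Hb orbT.
under eq_bigr => i _ do rewrite /= subSS.
exact: IH.
Qed.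

Lemma bin_lt m (b c : 'I_m -> nat) : (forall j, b j <= 1)%N -> (forall j, c j <= 1)%N ->
  (\sum_(j < m) b j * 2 ^ (m - j.+1) < \sum_(j < m) c j * 2 ^ (m - j.+1))%N ->
  exists k : 'I_m, (forall q : 'I_m, (q < k)%N -> b q = c q) /\ b k = 0%N /\ c k = 1%N.
Proof.
elim: m b c => [|m IH] b c Hb Hc; first by rewrite !big_ord0.
rewrite !big_ord_recl !subSS subn0.
under eq_bigr => i _ do rewrite lift0 subSS.
under [X in (_ < _ + X)%N]eq_bigr => i _ do rewrite lift0 subSS.
move: (Hb ord0) (Hc ord0).
case E1: (b ord0) => [|[|//]] _; case E2: (c ord0) => [|[|//]] _ H.
- rewrite !mul0n !add0n in H.
  have [k [Hq [Hk1 Hk2]]] := IH _ _ (fun j => Hb _) (fun j => Hc _) H.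
  exists (lift ord0 k); split => // q.
  case: (unliftP ord0 q) => [q' ->|->]; last by rewrite E1 E2.
  by rewrite /= !ltnS => /Hq.
- by exists ord0; split.
- exfalso; move: H; apply/negP; rewrite -leqNgt mul0n add0n mul1n.
  apply: leq_trans (leq_addr _ _); apply: ltnW; exact: bin_bound.
- rewrite !mul1n ltn_add2l in H.
  have [k [Hq [Hk1 Hk2]]] := IH _ _ (fun j => Hb _) (fun j => Hc _) H.
  exists (lift ord0 k); split => // q.
  case: (unliftP ord0 q) => [q' ->|->]; last by rewrite E1 E2.
  by rewrite /= !ltnS => /Hq.
Qed.

Lemma xrow_entry n m (B : 'M[int]_(n,m)) a b r c : xrow a b B r c = B (tperm a b r) c.
Proof. by rewrite /xrow /row_perm mxE. Qed.

Lemma bin_abs n m (B : 'M[int]_(n,m)) i j : is_binary_mx B -> (`|B i j|%N <= 1)%N.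
Proof. by move=> /(_ i j) [->|->]. Qed.

Lemma bigD2 n (f : 'I_n -> nat) (a b : 'I_n) : a != b ->
  (\sum_(r < n) f r = f a + f b + \sum_(r < n | (r != a) && (r != b)) f r)%N.
Proof. by move=> nab; rewrite (bigD1 a) //= (bigD1 b) //= ?addnA // eq_sym. Qed.

Lemma stepR n m (B : 'M[int]_(n,m)) (a b : 'I_n) : is_binary_mx B -> a != b ->
  lexlt (rvec (tperm_mx a b *m B)) (rvec B) -> lexlt (cvec (tperm_mx a b *m B)) (cvec B).
Proof.
move=> HB.
wlog lt_ab : a b / (a < b)%N.
  move=> W nab; case: (ltngtP a b) => [lt|lt|/val_inj e]; first exact: W.
    by rewrite /tperm_mx tpermC; apply: W => //; rewrite eq_sym.
  by rewrite e eqxx in nab.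
move=> nab; rewrite -xrowE.
have rvC : forall r, row_val (xrow a b B) r = row_val B (tperm a b r).
  by move=> r; apply: eq_bigr => j _; rewrite xrow_entry.
move/lexlt_ordP => [p [Hq Hp]].
have Hba : (row_val B b < row_val B a)%N.
  rewrite !rvC in Hp.
  case: (eqVneq p a) => [epa|npa].
    by move: Hp; rewrite epa tpermL.
  case: (eqVneq p b) => [epb|npb].
    move: (Hq a); rewrite rvC tpermL epb => /(_ lt_ab) e.
    by move: Hp; rewrite epb tpermR e ltnn.
  by move: Hp; rewrite tpermD ?ltnn // eq_sym.
have [k [Hk [Hk1 Hk2]]] := bin_lt (fun j => bin_abs b j HB) (fun j => bin_abs a j HB) Hba.
apply/lexlt_ordP; exists k; split.
  move=> q /Hk /= eq; apply: eq_bigr => r _; rewrite xrow_entry.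
  case: (eqVneq r a) => [->|nra]; first by rewrite tpermL eq.
  case: (eqVneq r b) => [->|nrb]; first by rewrite tpermR eq.
  by rewrite tpermD // eq_sym.
rewrite /col_val !(bigD2 _ nab).
rewrite !xrow_entry tpermL tpermR Hk1 Hk2 mul0n mul1n add0n addn0.
have -> : \sum_(i < n | (i != a) && (i != b)) `|xrow a b B i k|%N * 2 ^ (n - i.+1) =
          \sum_(i < n | (i != a) && (i != b)) `|B i k|%N * 2 ^ (n - i.+1).
  by apply: eq_bigr => r /andP[h1 h2]; rewrite xrow_entry tpermD // eq_sym.
rewrite ltn_add2r mul1n ltn_exp2l //.
have := ltn_ord b; lia.
Qed.
Local Open Scope ring_scope.

Lemma lexlt_trans s t u : lexlt s t -> lexlt t u -> lexlt s u.
Proof.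
elim: s t u => [|x s IH] [|y t] [|z u] //=.
case/orP => [h1|/andP[/eqP-> h1]]; case/orP => [h2|/andP[/eqP<- h2]].
- by rewrite (ltn_trans h1 h2).
- by rewrite h1.
- by rewrite h2.
- by rewrite eqxx (IH _ _ h1 h2) orbT.
Qed.

Lemma rvec_tr n m (B : 'M[int]_(n,m)) : rvec B^T = cvec B.
Proof. by apply: eq_map => i; apply: eq_bigr => j _; rewrite mxE. Qed.

Lemma cvec_tr n m (B : 'M[int]_(n,m)) : cvec B^T = rvec B.
Proof. by apply: eq_map => i; apply: eq_bigr => j _; rewrite mxE. Qed.

Lemma binary_tr n m (B : 'M[int]_(n,m)) : is_binary_mx B -> is_binary_mx B^T.
Proof. by move=> HB i j; rewrite mxE. Qed.

Lemma binary_permL n m (B : 'M[int]_(n,m)) s : is_binary_mx B -> is_binary_mx (perm_mx s *m B).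
Proof. by move=> HB i j; rewrite -row_permE mxE. Qed.

Lemma binary_permR n m (B : 'M[int]_(n,m)) s : is_binary_mx B -> is_binary_mx (B *m perm_mx s).
Proof. by move=> HB i j; rewrite -[s]invgK -col_permE mxE. Qed.

Lemma stepC n m (B : 'M[int]_(n,m)) (a b : 'I_m) : is_binary_mx B -> a != b ->
  lexlt (cvec (B *m tperm_mx a b)) (cvec B) -> lexlt (rvec (B *m tperm_mx a b)) (rvec B).
Proof.
move=> HB nab.
have E : B *m tperm_mx a b = (tperm_mx a b *m B^T)^T by rewrite trmx_mul tr_tperm_mx trmxK.
rewrite E cvec_tr rvec_tr -rvec_tr -(cvec_tr B).
exact: stepR (binary_tr HB) nab.
Qed.

Lemma mprod_perm k (Ys : seq 'M[int]_k) : (forall Y, Y \in Ys -> is_transposition_mx Y) ->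
  exists s, mprod Ys = perm_mx s.
Proof.
elim: Ys => [|Y Ys IH] H; first by exists 1%g; rewrite perm_mx1.
have [s Hs] := IH (fun Z hZ => H Z (mem_behead (s := Y :: Ys) hZ)).
have [a [b [_ ->]]] := H Y (mem_head _ _).
by exists (tperm a b * s)%g; rewrite /= perm_mxM -Hs.
Qed.

Lemma mprod_cons k (X : 'M[int]_k) Xs : mprod (X :: Xs) = X *m mprod Xs.
Proof. by []. Qed.

Lemma drop_cons1 T (x : T) s k : drop k.+1 (x :: s) = drop k s.
Proof. by []. Qed.

Lemma partA n m (A : 'M[int]_(n, m)) : is_binary_mx A ->
  forall Xs : seq 'M[int]_n,
      (0 < size Xs)%N ->
      (forall X, X \in Xs -> is_transposition_mx X) ->
      (forall k, (k < size Xs)%N ->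
         lexlt (rvec (mprod (drop k Xs) *m A)) (rvec (mprod (drop k.+1 Xs) *m A))) ->
      lexlt (cvec (mprod Xs *m A)) (cvec A).
Proof.
move=> HA; elim=> [//|X Xs IH] _ HT Hd.
have HT' : forall Z, Z \in Xs -> is_transposition_mx Z.
  by move=> Z hZ; apply: HT; rewrite in_cons hZ orbT.
have [s Hs] := mprod_perm HT'.
have HB : is_binary_mx (mprod Xs *m A) by rewrite Hs; apply: binary_permL.
have [a [b [nab EX]]] := HT X (mem_head _ _).
have step : lexlt (cvec (mprod (X :: Xs) *m A)) (cvec (mprod Xs *m A)).
  rewrite /= -mulmxA EX; apply: stepR => //.
  by move: (Hd 0%N isT); rewrite drop_cons1 !drop0 mprod_cons -mulmxA EX.
case: (posnP (size Xs)) => [/size0nil E|pos].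
  by move: step; rewrite E /= mul1mx.
apply: lexlt_trans step (IH pos HT' _) => k hk.
by move: (Hd k.+1 hk); rewrite !drop_cons1.
Qed.

Lemma partB n m (A : 'M[int]_(n, m)) : is_binary_mx A ->
  forall Ys : seq 'M[int]_m,
      (0 < size Ys)%N ->
      (forall Y, Y \in Ys -> is_transposition_mx Y) ->
      (forall k, (k < size Ys)%N ->
         lexlt (cvec (A *m mprod (drop k Ys))) (cvec (A *m mprod (drop k.+1 Ys)))) ->
      lexlt (rvec (A *m mprod Ys)) (rvec A).
Proof.
move=> HA; elim=> [//|X Xs IH] _ HT Hd.
have HT' : forall Z, Z \in Xs -> is_transposition_mx Z.
  by move=> Z hZ; apply: HT; rewrite in_cons hZ orbT.
have [s Hs] := mprod_perm HT'.
have HB : is_binary_mx (A *m mprod Xs) by rewrite Hs; apply: binary_permR.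
have [a [b [nab EX]]] := HT X (mem_head _ _).
have EE : A *m mprod (X :: Xs) = (A *m mprod Xs) *m tperm_mx (s a) (s b).
  rewrite /= EX Hs -!mulmxA; congr (_ *m _).
  by rewrite /tperm_mx -!perm_mxM conjgC tpermJ.
have nab' : s a != s b by apply: contra nab => /eqP /perm_inj ->.
have step : lexlt (rvec (A *m mprod (X :: Xs))) (rvec (A *m mprod Xs)).
  rewrite EE; apply: stepC => //.
  by move: (Hd 0%N isT); rewrite drop_cons1 !drop0 EE.
case: (posnP (size Xs)) => [/size0nil E|pos].
  by move: step; rewrite E [mprod [::]]/= mulmx1.
apply: lexlt_trans step (IH pos HT' _) => k hk.
by move: (Hd k.+1 hk); rewrite !drop_cons1.
Qed.

Local Close Scope ring_scope.
Theorem theorem1 (n m : nat) (A : 'M[int]_(n, m)) :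
  is_binary_mx A ->
  (forall Xs : seq 'M[int]_n,
      (0 < size Xs)%N ->
      (forall X, X \in Xs -> is_transposition_mx X) ->
      (forall k, (k < size Xs)%N ->
         lexlt (rvec (mprod (drop k Xs) *m A)) (rvec (mprod (drop k.+1 Xs) *m A))) ->
      lexlt (cvec (mprod Xs *m A)) (cvec A)) /\
  (forall Ys : seq 'M[int]_m,
      (0 < size Ys)%N ->
      (forall Y, Y \in Ys -> is_transposition_mx Y) ->
      (forall k, (k < size Ys)%N ->
         lexlt (cvec (A *m mprod (drop k Ys))) (cvec (A *m mprod (drop k.+1 Ys)))) ->
      lexlt (rvec (A *m mprod Ys)) (rvec A)).
Proof. move=> HA; split; [exact: partA | exact: partB]. Qed.
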